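(* Let $A$ be a Banach lattice algebra and let $\{p_\lambda\}_{\lambda\in\Lambda}\subseteq BP_l(A)\cap BP_r(A)$ satisfy $p_\alpha p_\beta=\delta_{\alpha\beta}p_\alpha$ for all $\alpha,\beta\in\Lambda$. If $\Phi\subseteq\Lambda\times\Lambda$ is finite, then for all $x\in A_+$, \[\bigvee_{(\alpha,\beta)\in\Phi}p_\alpha x p_\beta=\sum_{(\alpha,\beta)\in\Phi}p_\alpha x p_\beta .\]
   Context: A Banach lattice algebra is a real Banach lattice $A$ equipped with an associative bilinear product making $(A,\cdot)$ a Banach algebra ($\|xy\|\le\|x\|\|y\|$) such that $xy\ge 0$ whenever $x,y\ge0$. For $a\in A$, $L_a,R_a\colon A\to A$ denote $L_a(x)=ax$, $R_a(x)=xa$. A band projection on a Banach lattice $X$ is an operator $P\colon X\to X$ with $P^2=P$ and $0\le P\le I_X$. $BP_l(A)=\{a\in A_+: L_a \text{ is a band projection}\}$, $BP_r(A)=\{a\in A_+: R_a\text{ is a band projection}\}$. $\delta_{\alpha\beta}$ is the Kronecker delta. *)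

(* Defs.v *)
From HB Require Import structures.
From mathcomp Require Import all_boot all_order all_algebra.
From mathcomp Require Import finmap.
From mathcomp Require Import all_classical all_reals all_analysis.
Set Implicit Arguments. Unset Strict Implicit. Unset Printing Implicit Defensive.
Import Order.TTheory GRing.Theory Num.Theory.
Import numFieldNormedType.Exports.
Local Open Scope ring_scope.

Record BLA (R : realType) (V : completeNormedModType R) := {
  ble : V -> V -> Prop;
  bjoin : V -> V -> V;
  bmeet : V -> V -> V;
  bmul : V -> V -> V;
  ble_refl : forall x, ble x x;
  ble_anti : forall x y, ble x y -> ble y x -> x = y;
  ble_trans : forall x y z, ble x y -> ble y z -> ble x z;
  bjoin_ubl : forall x y, ble x (bjoin x y);
  bjoin_ubr : forall x y, ble y (bjoin x y);
  bjoin_least : forall x y z, ble x z -> ble y z -> ble (bjoin x y) z;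
  bmeet_lbl : forall x y, ble (bmeet x y) x;
  bmeet_lbr : forall x y, ble (bmeet x y) y;
  bmeet_greatest : forall x y z, ble z x -> ble z y -> ble z (bmeet x y);
  ble_add : forall x y z, ble x y -> ble (x + z) (y + z);
  ble_scale : forall (t : R) x, 0 <= t -> ble 0 x -> ble 0 (t *: x);
  (* lattice norm: |x| <= |y| implies ||x|| <= ||y||, with |x| = x v (-x) *)
  blattice_norm : forall x y,
      ble (bjoin x (- x)) (bjoin y (- y)) -> `|x| <= `|y|;
  bmulA : forall x y z, bmul x (bmul y z) = bmul (bmul x y) z;
  bmulDl : forall x y z, bmul (x + y) z = bmul x z + bmul y z;
  bmulDr : forall x y z, bmul x (y + z) = bmul x y + bmul x z;
  bmulZl : forall (t : R) x y, bmul (t *: x) y = t *: bmul x y;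
  bmulZr : forall (t : R) x y, bmul x (t *: y) = t *: bmul x y;
  bmul_norm : forall x y, `|bmul x y| <= `|x| * `|y|;
  bmul_ge0 : forall x y, ble 0 x -> ble 0 y -> ble 0 (bmul x y)
}.

Section BP.
Variables (R : realType) (V : completeNormedModType R) (A : BLA V).

Definition band_projection (P : V -> V) : Prop :=
  (forall x, P (P x) = P x) /\
  (forall x, ble A 0 x -> ble A 0 (P x) /\ ble A (P x) x).

Definition BP_l (a : V) : Prop :=
  ble A 0 a /\ band_projection (fun x => bmul A a x).
Definition BP_r (a : V) : Prop :=
  ble A 0 a /\ band_projection (fun x => bmul A x a).

(* Supremum of a finite family (indexed by a sequence) via iterated join,
   starting from 0 (only used for families of positive elements, where this
   coincides with the lattice supremum when the family is nonempty). *)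
Definition fin_sup (I : Type) (s : seq I) (f : I -> V) : V :=
  \big[bjoin A/0]_(i <- s) f i.
End BP.

(* Main.v *)
Require Import Defs.
From HB Require Import structures.
From mathcomp Require Import all_boot all_order all_algebra.
From mathcomp Require Import finmap.
From mathcomp Require Import all_classical all_reals all_analysis.
Import Order.TTheory GRing.Theory Num.Theory.
Local Open Scope ring_scope.
Local Open Scope fset_scope.

Set Implicit Arguments.
Section Aux.
Variables (R : realType) (V : completeNormedModType R) (A : BLA V).
Local Notation le := (ble A).
Local Notation M := (bmul A).
Local Open Scope ring_scope.

Lemma le_ge0 x y : le x y -> le 0 (y - x).
Proof. by move/(ble_add (- x)); rewrite subrr. Qed.

Lemma ge0_le x y : le 0 (y - x) -> le x y.
Proof. by move/(ble_add x); rewrite add0r subrK. Qed.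

Lemma le_addb x y z w : le x y -> le z w -> le (x + z) (y + w).
Proof.
move=> h1 h2; apply: (ble_trans (ble_add z h1)).
by rewrite ![y + _]addrC; apply: ble_add.
Qed.

Lemma add_ge0' x y : le 0 x -> le 0 y -> le 0 (x + y).
Proof. by move=> h1 h2; have := le_addb _ _ _ _ h1 h2; rewrite addr0. Qed.

Lemma joinE u v : bjoin A u v = u + v - bmeet A u v.
Proof.
set j := bjoin A u v; set m := bmeet A u v.
apply: ble_anti.
- apply: bjoin_least; apply: ge0_le.
  + have -> : u + v - m - u = v - m by rewrite addrAC (addrAC u) subrr add0r.
    exact/le_ge0/bmeet_lbr.
  + have -> : u + v - m - v = u - m by rewrite addrAC addrK.
    exact/le_ge0/bmeet_lbl.
- apply: ge0_le.
  have -> : j - (u + v - m) = m - (u + v - j) by rewrite !opprB addrCA.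
  apply: le_ge0; apply: bmeet_greatest; apply: ge0_le.
  + have -> : u - (u + v - j) = j - v by rewrite opprB opprD addrCA addNKr.
    exact/le_ge0/bjoin_ubr.
  + have -> : v - (u + v - j) = j - u.
      by rewrite (addrC u) opprB opprD addrCA addNKr.
    exact/le_ge0/bjoin_ubl.
Qed.

Lemma MNl x y : M (- x) y = - M x y.
Proof. by rewrite -scaleN1r bmulZl scaleN1r. Qed.
Lemma MNr x y : M x (- y) = - M x y.
Proof. by rewrite -scaleN1r bmulZr scaleN1r. Qed.
Lemma M0l y : M 0 y = 0.
Proof. by rewrite -[X in M X _](@scale0r R V 0) bmulZl scale0r. Qed.
Lemma M0r y : M y 0 = 0.
Proof. by rewrite -[X in M _ X](@scale0r R V 0) bmulZr scale0r. Qed.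


Variables (Lambda : choiceType) (p : Lambda -> V)
  (hp : forall l, BP_l A (p l) /\ BP_r A (p l))
  (horth : forall a b : Lambda,
      M (p a) (p b) = if a == b then p a else 0)
  (x : V) (hx : le 0 x).

Definition Q a b z := M (M (p a) z) (p b).
Definition f (ab : Lambda * Lambda) := M (M (p ab.1) x) (p ab.2).

Lemma p_ge0 l : le 0 (p l).
Proof. by case: (hp l) => [[h _] _]. Qed.
Lemma pL l z : le 0 z -> le 0 (M (p l) z) /\ le (M (p l) z) z.
Proof. by case: (hp l) => [[_ [_ h]] _]; apply: h. Qed.
Lemma pR l z : le 0 z -> le 0 (M z (p l)) /\ le (M z (p l)) z.
Proof. by case: (hp l) => [_ [_ [_ h]]]; apply: h. Qed.

Lemma Qpos a b z : le 0 z -> le 0 (Q a b z).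
Proof. by move=> hz; apply: bmul_ge0; [apply: bmul_ge0 => //|]; apply: p_ge0. Qed.

Lemma Qle a b z : le 0 z -> le (Q a b z) z.
Proof.
move=> hz; have [h1 h2] := pL a z hz; have [_ h3] := pR b _ h1.
exact: ble_trans h3 h2.
Qed.

Lemma QB a b y z : Q a b (y - z) = Q a b y - Q a b z.
Proof. by rewrite /Q bmulDr bmulDl MNr MNl. Qed.
Lemma QD a b y z : Q a b (y + z) = Q a b y + Q a b z.
Proof. by rewrite /Q bmulDr bmulDl. Qed.
Lemma Q0 a b : Q a b 0 = 0.
Proof. by rewrite /Q M0r M0l. Qed.

Lemma Qmono a b y z : le z y -> le (Q a b z) (Q a b y).
Proof. by move=> h; apply: ge0_le; rewrite -QB; apply/Qpos/le_ge0. Qed.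

Lemma Qcomono a b y z : le z y -> le (z - Q a b z) (y - Q a b y).
Proof.
move=> h; apply: ge0_le.
have -> : y - Q a b y - (z - Q a b z) = (y - z) - Q a b (y - z).
  by rewrite QB !opprD !opprK !addrA (addrAC y).
exact/le_ge0/Qle/le_ge0.
Qed.

Lemma f_ge0 ab : le 0 (f ab).
Proof. exact: (Qpos ab.1 ab.2 x hx). Qed.

Lemma Qf a b c d : Q a b (f (c, d)) = M (M (M (p a) (p c)) x) (M (p d) (p b)).
Proof. by rewrite /Q /f /= !bmulA -bmulA. Qed.

Lemma Qf_self a b : Q a b (f (a, b)) = f (a, b).
Proof. by rewrite Qf !horth !eqxx. Qed.

Lemma Qf_other a b cd : cd != (a, b) -> Q a b (f cd) = 0.
Proof.
case: cd => c d hne; rewrite Qf !horth.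
case: (eqVneq a c) => [ea|ne]; last by rewrite M0l M0l.
case: (eqVneq d b) => [eb|ne]; last by rewrite M0r.
by move: hne; rewrite ea eb eqxx.
Qed.

Lemma sum_ge0 (s : seq (Lambda * Lambda)) : le 0 (\sum_(ab <- s) f ab).
Proof.
elim: s => [|ab s IH]; first by rewrite big_nil; apply: ble_refl.
by rewrite big_cons; apply: add_ge0' => //; apply: f_ge0.
Qed.

Lemma QS a b (s : seq (Lambda * Lambda)) :
  (a, b) \notin s -> Q a b (\sum_(cd <- s) f cd) = 0.
Proof.
elim: s => [|cd s IH]; first by rewrite big_nil Q0.
rewrite in_cons negb_or => /andP [h1 h2].
rewrite big_cons QD IH // Qf_other ?addr0 //.
by rewrite eq_sym.
Qed.

Lemma main_aux (s : seq (Lambda * Lambda)) : uniq s ->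
  \big[bjoin A/0]_(ab <- s) f ab = \sum_(ab <- s) f ab.
Proof.
elim: s => [|[a b] s IH]; first by rewrite !big_nil.
move=> /= /andP [nin us]; rewrite !big_cons IH // joinE.
set S := \sum_(ab <- s) f ab.
suff -> : bmeet A (f (a, b)) S = 0 by rewrite subr0.
set w := bmeet A (f (a, b)) S.
have hw0 : le 0 w by apply: bmeet_greatest; [apply: f_ge0|apply: sum_ge0].
have hQw : Q a b w = 0.
  apply: ble_anti; last exact: Qpos.
  rewrite -(QS a b s nin); apply: Qmono; exact: bmeet_lbr.
have h1 : le (w - Q a b w) (f (a, b) - Q a b (f (a, b))).
  apply: Qcomono; exact: bmeet_lbl.
rewrite Qf_self subrr in h1.
have h2 : le 0 (w - Q a b w) by apply/le_ge0/Qle.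
have := ble_anti h1 h2; rewrite hQw subr0 => ->; done.
Qed.

End Aux.

Theorem mainTheorem2 (R : realType) (V : completeNormedModType R) (A : BLA V)
  (Lambda : choiceType) (p : Lambda -> V)
  (hp : forall l, BP_l A (p l) /\ BP_r A (p l))
  (horth : forall a b : Lambda,
      bmul A (p a) (p b) = if a == b then p a else 0)
  (Phi : {fset Lambda * Lambda}) (x : V) (hx : ble A 0 x) :
  fin_sup A Phi (fun ab => bmul A (bmul A (p ab.1) x) (p ab.2)) =
  \sum_(ab <- Phi) bmul A (bmul A (p ab.1) x) (p ab.2).
Proof.
apply: main_aux => //; exact: fset_uniq.
Qed.
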